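(* Let $L$ be a subsemifield of $\mathbb{R}_\mathrm{max}$ containing $\mathbb{Z}_\mathrm{max}$ which is finitely generated as a $\mathbb{Z}_\mathrm{max}$-semimodule. Then there exists a positive integer $n$ such that $L=(\frac{1}{n}\mathbb{Z})_\mathrm{max}$.
   Context: For a totally ordered abelian group $M$, $M_\mathrm{max}=M\cup\{-\infty\}$ is the idempotent semifield whose addition is $\max$ and whose multiplication is the group operation of $M$ (extended by $-\infty$ being absorbing). Thus $\mathbb{R}_\mathrm{max}$, $\mathbb{Z}_\mathrm{max}$ and $(\frac{1}{n}\mathbb{Z})_\mathrm{max}$ arise from the subgroups $\mathbb{R}\supseteq\frac1n\mathbb{Z}\supseteq\mathbb{Z}$, and $\mathbb{Z}_\mathrm{max}\subseteq(\frac1n\mathbb{Z})_\mathrm{max}\subseteq\mathbb{R}_\mathrm{max}$. *)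

(* Defs.v *)
From Stdlib Require Import Reals List.
Open Scope R_scope.

(* The idempotent semifield R_max = R ∪ {-oo}; None encodes -oo. *)
Definition RmaxT := option R.

Definition tadd (a b : RmaxT) : RmaxT :=
  match a, b with
  | None, _ => b
  | _, None => a
  | Some x, Some y => Some (Rmax x y)
  end.

Definition tmul (a b : RmaxT) : RmaxT :=
  match a, b with
  | Some x, Some y => Some (x + y)
  | _, _ => None
  end.

Definition tinv (a : RmaxT) : RmaxT :=
  match a with Some x => Some (- x) | None => None end.

Definition is_subsemifield (L : RmaxT -> Prop) : Prop :=
  L None /\ L (Some 0) /\
  (forall a b, L a -> L b -> L (tadd a b)) /\
  (forall a b, L a -> L b -> L (tmul a b)) /\
  (forall x, L (Some x) -> L (tinv (Some x))).

Definition Zmax (a : RmaxT) : Prop := a = None \/ exists k : Z, a = Some (IZR k).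

Definition fracZmax (n : nat) (a : RmaxT) : Prop :=
  a = None \/ exists k : Z, a = Some (IZR k / INR n).

Definition tlincomb (cs gs : list RmaxT) : RmaxT :=
  fold_right tadd None (map (fun p => tmul (fst p) (snd p)) (combine cs gs)).

Definition fin_gen_Zmax_semimodule (L : RmaxT -> Prop) : Prop :=
  exists gs : list RmaxT, Forall L gs /\
    forall x, L x -> exists cs : list RmaxT,
      length cs = length gs /\ Forall Zmax cs /\ x = tlincomb cs gs.

(* Main.v *)
Require Import Defs.
From Stdlib Require Import Reals List Lra Lia Classical ZArith.
Open Scope R_scope.

Lemma fold_in (l : list RmaxT) v : fold_right tadd None l = Some v -> In (Some v) l.
Proof.
  induction l as [|h t IH]; simpl; [discriminate|].
  destruct h as [x|]; destruct (fold_right tadd None t) as [y|] eqn:E; simpl;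
    intro H; try (inversion H; subst; auto; fail).
  - unfold Rmax in H; destruct (Rle_dec x y); inversion H; subst; auto.
Qed.

Lemma lincomb_form cs gs v : Forall Zmax cs -> tlincomb cs gs = Some v ->
  exists k g, In (Some g) gs /\ v = IZR k + g.
Proof.
  intros HZ H. unfold tlincomb in H. apply fold_in in H.
  apply in_map_iff in H. destruct H as [[c g] [Hf Hin]]. simpl in Hf.
  pose proof (in_combine_l _ _ _ _ Hin) as Hc.
  pose proof (in_combine_r _ _ _ _ Hin) as Hg.
  rewrite Forall_forall in HZ. destruct (HZ _ Hc) as [->|[k ->]]; [discriminate|].
  destruct g as [g|]; [|discriminate]. inversion Hf. eauto.
Qed.

Lemma min_exists (l : list R) : forall (P : R -> Prop), (forall x, P x -> In x l) ->
  (exists x, P x) -> exists m, P m /\ forall y, P y -> m <= y.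
Proof.
  induction l as [|h t IH]; intros P HP [x Hx].
  - destruct (HP _ Hx).
  - destruct (classic (P h)) as [Ph|nPh].
    + destruct (classic (exists x, P x /\ x < h)) as [E|NE].
      * destruct (IH (fun x => P x /\ x < h)) as [m [[Pm Hm] Hmin]]; auto.
        { intros y [Py Hy]. destruct (HP _ Py); auto. subst; lra. }
        exists m; split; auto. intros y Py.
        destruct (Rlt_or_le y h); [apply Hmin; auto | lra].
      * exists h; split; auto. intros y Py.
        destruct (Rlt_or_le y h); auto. exfalso; eauto.
    + apply (IH P); eauto. intros y Py. destruct (HP _ Py); auto. subst; contradiction.
Qed.

Definition frc (o : RmaxT) : R :=
  match o with Some g => g - IZR (Int_part g) | None => 0 end.

Lemma int_small m : -1 < IZR m < 1 -> m = 0%Z.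
Proof. intros [H1 H2]. apply lt_IZR in H1. apply lt_IZR in H2. lia. Qed.

Theorem mainTheorem8 (L : RmaxT -> Prop) :
  is_subsemifield L ->
  (forall a, Zmax a -> L a) ->
  fin_gen_Zmax_semimodule L ->
  exists n : nat, (0 < n)%nat /\ (forall a, L a <-> fracZmax n a).
Proof.
  intros [L0 [L1 [Ladd [Lmul Linv]]]] HZ [gs [Hgs Hgen]].
  set (G := fun x => L (Some x)).
  assert (Gadd : forall x y, G x -> G y -> G (x + y)).
  { intros x y Hx Hy. exact (Lmul _ _ Hx Hy). }
  assert (Gopp : forall x, G x -> G (- x)). { intros x Hx. exact (Linv _ Hx). }
  assert (Gint : forall k, G (IZR k)). { intro k. apply HZ. right; eauto. }
  assert (Gfin : forall x, G x -> 0 <= x < 1 -> In x (map frc gs)).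
  { intros x Hx Hr. destruct (Hgen _ Hx) as [cs [_ [Hcs E]]].
    symmetry in E. destruct (lincomb_form _ _ _ Hcs E) as [k [g [Hin ->]]].
    apply in_map_iff. exists (Some g); split; auto. simpl.
    destruct (base_Int_part g) as [B1 B2].
    assert (Hm : IZR k + g - (g - IZR (Int_part g)) = IZR (k + Int_part g)).
    { rewrite plus_IZR; ring. }
    assert (k + Int_part g = 0)%Z as Hk.
    { apply int_small. rewrite <- Hm. lra. }
    assert (IZR (k + Int_part g) = 0) by (rewrite Hk; reflexivity). lra. }
  assert (Gsub : forall x y, G x -> G y -> G (x - y)).
  { intros; unfold Rminus; auto. }
  assert (Gmul : forall a, G a -> forall z, G (IZR z * a)).
  { intros a Ha.
    assert (HN : forall n, G (INR n * a)).
    { induction n. simpl. replace (0 * a) with (IZR 0) by (simpl; ring). auto.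
      rewrite S_INR. replace ((INR n + 1) * a) with (INR n * a + a) by ring. auto. }
    intro z. destruct (Z.le_gt_cases 0%Z z).
    - rewrite <- (Z2Nat.id z) by lia. rewrite <- INR_IZR_INZ. auto.
    - replace z with (- Z.of_nat (Z.to_nat (- z)))%Z by lia.
      rewrite opp_IZR, <- INR_IZR_INZ.
      replace (- INR (Z.to_nat (- z)) * a) with (- (INR (Z.to_nat (- z)) * a)) by ring. auto. }
  set (S := fun x => G x /\ 0 < x < 1).
  destruct (classic (exists x, S x)) as [E|NE].
  - destruct (min_exists (map frc gs) S) as [a [[Ga Ha] Hmin]]; auto.
    { intros x [Gx Hx]. apply Gfin; auto; lra. }
    assert (Hdec : forall x, G x -> x = IZR (Int_part (x / a)) * a).
    { intros x Gx. set (q := Int_part (x / a)).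
      destruct (base_Int_part (x / a)) as [B1 B2]. fold q in B1, B2.
      assert (Gr : G (x - IZR q * a)) by auto.
      assert (R1 : IZR q * a <= x).
      { apply (Rmult_le_compat_r a) in B1; [|lra].
        unfold Rdiv in B1. rewrite Rmult_assoc, Rinv_l in B1; lra. }
      assert (R2 : x - IZR q * a < a).
      { assert (x / a - IZR q < 1) by lra.
        apply (Rmult_lt_compat_r a) in H; [|lra].
        unfold Rdiv in H. rewrite Rmult_minus_distr_r, Rmult_assoc, Rinv_l in H; lra. }
      destruct (Req_dec (x - IZR q * a) 0); [lra|].
      assert (a <= x - IZR q * a) by (apply Hmin; split; auto; lra). lra. }
    pose proof (Hdec 1 (Gint 1%Z)) as H1. set (k := Int_part (1 / a)) in H1.
    assert (kpos : (0 < k)%Z).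
    { apply lt_0_IZR. destruct (Rle_or_lt (IZR k) 0); auto.
      assert (IZR k * a <= 0) by nra. lra. }
    exists (Z.to_nat k). split; [lia|].
    assert (Ek : INR (Z.to_nat k) = IZR k).
    { rewrite INR_IZR_INZ, Z2Nat.id; auto; lia. }
    assert (Ea : a = 1 / IZR k).
    { assert (IZR k <> 0) by (apply not_0_IZR; lia). field_simplify_eq; auto. lra. }
    intros [v|]; split; intro Hv.
    + right. exists (Int_part (v / a)). rewrite Ek. f_equal.
      rewrite (Hdec v Hv) at 1. rewrite Ea. unfold Rdiv. ring.
    + destruct Hv as [Hv|[q Hv]]; [discriminate|]. inversion Hv.
      rewrite Ek. replace (IZR q / IZR k) with (IZR q * a) by (rewrite Ea; unfold Rdiv; ring).
      apply Gmul; auto.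
    + left; auto.
    + exact L0.
  - exists 1%nat. split; [lia|].
    intros [v|]; split; intro Hv.
    + right. exists (Int_part v). simpl. f_equal.
      destruct (base_Int_part v) as [B1 B2].
      assert (Gr : G (v - IZR (Int_part v))) by auto.
      destruct (Req_dec (v - IZR (Int_part v)) 0).
      * unfold Rdiv; rewrite Rinv_1; lra.
      * exfalso. apply NE. exists (v - IZR (Int_part v)). split; auto. lra.
    + destruct Hv as [Hv|[q Hv]]; [discriminate|]. inversion Hv.
      simpl. unfold Rdiv; rewrite Rinv_1, Rmult_1_r. apply Gint.
    + left; auto.
    + exact L0.
Qed.
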